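(* Let $C_1,C_2\subseteq\mathbb{R}^d$ be convex polyhedral sets with $C_1\cap C_2\neq\emptyset$. Then there exists a constant $M>0$ such that for all $x\in C_1$ and $y\in C_2$, $$\Big\|\mathrm{proj}_{C_1}(x)+\mathrm{proj}_{C_2}(y)-2\,\mathrm{proj}_{C_1\cap C_2}\Big(\frac{x+y}{2}\Big)\Big\|\le M\,\|\mathrm{proj}_{C_1}(x)-\mathrm{proj}_{C_2}(y)\|.$$
   Context: $\|\cdot\|$ is the Euclidean norm and $\mathrm{proj}_C(z)=\arg\min_{u\in C}\|z-u\|$ is the Euclidean projection onto a nonempty closed convex set $C$. A convex polyhedral set is a finite intersection of closed half-spaces. *)

(* Defs.v *)
From HB Require Import structures.
From mathcomp Require Import all_boot all_order all_algebra.
From mathcomp Require Import reals.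
Set Implicit Arguments. Unset Strict Implicit. Unset Printing Implicit Defensive.
Import Order.TTheory GRing.Theory Num.Theory.
Local Open Scope ring_scope.

Definition enorm (R : realType) (d : nat) (v : 'cV[R]_d) : R :=
  Num.sqrt (\sum_(i < d) v i 0 ^+ 2).

Definition polyhedral (R : realType) (d : nat) (C : 'cV[R]_d -> Prop) : Prop :=
  exists (m : nat) (A : 'M[R]_(m, d)) (b : 'cV[R]_m),
    forall x, C x <-> (forall i : 'I_m, (A *m x) i 0 <= b i 0).

Definition is_proj (R : realType) (d : nat) (C : 'cV[R]_d -> Prop)
    (z p : 'cV[R]_d) : Prop :=
  C p /\ forall u, C u -> enorm (z - p) <= enorm (z - u).

(* Main.v *)
Require Import Defs.
From HB Require Import structures.
From mathcomp Require Import all_boot all_order all_algebra.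
From mathcomp Require Import reals ring lra.
From Stdlib Require Import Classical.
Import Order.TTheory GRing.Theory Num.Theory.
Local Open Scope ring_scope.

Definition dot {R : realType} {d : nat} (a v : 'cV[R]_d) : R := \sum_i a i 0 * v i 0.
Definition N1 {R : realType} {d : nat} (v : 'cV[R]_d) : R := \sum_i `|v i 0|.

Lemma dotD {R : realType} {d : nat} (a v w : 'cV[R]_d) : dot a (v + w) = dot a v + dot a w.
Proof. rewrite /dot -big_split; apply eq_bigr => i _; rewrite mxE mulrDr. by []. Qed.
Lemma dotZ {R : realType} {d : nat} (a v : 'cV[R]_d) k : dot a (k *: v) = k * dot a v.
Proof. rewrite /dot mulr_sumr; apply eq_bigr => i _; rewrite mxE mulrCA. by []. Qed.
Lemma dotN {R : realType} {d : nat} (a v : 'cV[R]_d) : dot a (- v) = - dot a v.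
Proof. by rewrite -scaleN1r dotZ mulN1r. Qed.
Lemma dotB {R : realType} {d : nat} (a v w : 'cV[R]_d) : dot a (v - w) = dot a v - dot a w.
Proof. by rewrite dotD dotN. Qed.
Lemma N1_ge0 {R : realType} {d : nat} (v : 'cV[R]_d) : 0 <= N1 v.
Proof. by apply: sumr_ge0 => i _. Qed.
Lemma N1D {R : realType} {d : nat} (v w : 'cV[R]_d) : N1 (v + w) <= N1 v + N1 w.
Proof. rewrite /N1 -big_split ler_sum // => i _; rewrite mxE ler_normD. by []. Qed.
Lemma N1Z {R : realType} {d : nat} (v : 'cV[R]_d) k : N1 (k *: v) = `|k| * N1 v.
Proof. rewrite /N1 mulr_sumr; apply eq_bigr => i _; rewrite mxE normrM. by []. Qed.
Lemma N1N {R : realType} {d : nat} (v : 'cV[R]_d) : N1 (- v) = N1 v.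
Proof. by rewrite -scaleN1r N1Z normrN normr1 mul1r. Qed.
Lemma N1B {R : realType} {d : nat} (v w : 'cV[R]_d) : N1 (v - w) = N1 (w - v).
Proof. by rewrite -N1N opprB. Qed.
Lemma N1_coord {R : realType} {d : nat} (v : 'cV[R]_d) i : `|v i 0| <= N1 v.
Proof.
rewrite /N1 (bigD1 i) //= lerDl; apply: sumr_ge0 => j _; done.
Qed.
Lemma dot_le {R : realType} {d : nat} (a v : 'cV[R]_d) : `|dot a v| <= N1 a * N1 v.
Proof.
apply: le_trans (ler_norm_sum _ _ _) _.
rewrite /N1 mulr_suml; apply: ler_sum => i _.
by rewrite normrM ler_wpM2l // N1_coord.
Qed.
Lemma enorm_le_N1 {R : realType} {d : nat} (v : 'cV[R]_d) : enorm v <= N1 v.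
Proof.
rewrite /enorm -(ger0_norm (N1_ge0 v)) -sqrtr_sqr ler_sqrt ?exprn_ge0 ?N1_ge0 //.
rewrite expr2 {2}/N1 mulr_suml; apply: ler_sum => i _.
rewrite -real_normK ?num_real // expr2 ler_wpM2l // N1_coord //.
Qed.
Lemma N1_le_enorm {R : realType} {d : nat} (v : 'cV[R]_d) : N1 v <= d%:R * enorm v.
Proof.
rewrite /N1 -[d in d%:R]card_ord mulr_natl -sumr_const; apply: ler_sum => i _.
rewrite /enorm -sqrtr_sqr ler_wsqrtr // (bigD1 i) //= lerDl; apply: sumr_ge0 => j _.
exact: sqr_ge0.
Qed.
Lemma enorm_eq0 {R : realType} {d : nat} (v : 'cV[R]_d) : enorm v <= 0 -> v = 0.
Proof.
move=> H; have: N1 v <= 0 by apply: le_trans (N1_le_enorm v) _; rewrite mulr_ge0_le0 ?ler0n.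
move=> H2; apply/matrixP => i j; rewrite (ord1 j) mxE; apply/eqP; rewrite -normr_le0.
exact: le_trans (N1_coord v i) H2.
Qed.

Definition eqsat {R : realType} {d : nat} (E : seq ('cV[R]_d * R)) (v : 'cV[R]_d) :=
  all (fun c => dot c.1 v == c.2) E.
Definition ineqsat {R : realType} {d : nat} (E : seq ('cV[R]_d * R)) (v : 'cV[R]_d) :=
  all (fun c => dot c.1 v <= c.2) E.
Definition eres {R : realType} {d : nat} (E : seq ('cV[R]_d * R)) (u : 'cV[R]_d) :=
  \sum_(c <- E) `|dot c.1 u - c.2|.
Definition ires {R : realType} {d : nat} (E : seq ('cV[R]_d * R)) (u : 'cV[R]_d) :=
  \sum_(c <- E) Num.max 0 (dot c.1 u - c.2).

Lemma eres_ge0 {R : realType} {d : nat} (E : seq ('cV[R]_d * R)) u : 0 <= eres E u.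
Proof. by apply: sumr_ge0 => c _. Qed.
Lemma ires_ge0 {R : realType} {d : nat} (E : seq ('cV[R]_d * R)) u : 0 <= ires E u.
Proof. by apply: sumr_ge0 => c _; rewrite le_max lexx. Qed.

Lemma hoff_eq {R : realType} {d : nat} (es : seq 'cV[R]_d) : exists k, 0 <= k /\
  forall E, map fst E = es -> (exists w, eqsat E w) ->
  forall u, exists v, eqsat E v /\ N1 (u - v) <= k * eres E u.
Proof.
elim: es => [|a es IH].
  exists 0; split => // -[|//] _ _ u; exists u; split => //.
  by rewrite mul0r /N1 big1 // => i _; rewrite !mxE subrr normr0.
have [k [k0 Hk]] := IH.
case: (classic (exists d0 : 'cV[R]_d, all (fun b => dot b d0 == 0) es /\ dot a d0 = 1)).
  case=> d0 [Hd0 Ha].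
  exists (k + N1 d0 * (N1 a * k + 1)); split.
    by rewrite addr_ge0 // mulr_ge0 ?N1_ge0 // addr_ge0 // mulr_ge0 ?N1_ge0.
  move=> [|c E] //= [ca EE] [w /andP[_ Hw]] u.
  have [v' [Hv' Hle]] := Hk E EE (ex_intro _ w Hw) u.
  pose t := dot a v' - c.2.
  exists (v' - t *: d0); split.
    apply/andP; split.
      by rewrite ca dotB dotZ Ha /t; apply/eqP; ring.
    apply/allP => b bE; rewrite dotB dotZ.
    have: b.1 \in es by rewrite -EE; apply: map_f.
    move/(allP Hd0)/eqP => ->; rewrite mulr0 subr0; exact: (allP Hv').
  have h1 : N1 (u - (v' - t *: d0)) <= N1 (u - v') + `|t| * N1 d0.
    have -> : u - (v' - t *: d0) = (u - v') + t *: d0.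
      by rewrite opprB addrA addrAC.
    rewrite -N1Z; exact: N1D.
  have h2 : `|t| <= N1 a * N1 (u - v') + `|dot c.1 u - c.2|.
    have -> : t = dot a (v' - u) + (dot c.1 u - c.2) by rewrite dotB /t ca; ring.
    apply: le_trans (ler_normD _ _) _; rewrite lerD2r N1B; exact: dot_le.
  have h3 : eres (c :: E) u = `|dot c.1 u - c.2| + eres E u by rewrite /eres big_cons.
  rewrite h3.
  have := eres_ge0 E u; have := N1_ge0 d0; have := N1_ge0 a; have := N1_ge0 (u - v').
  have := normr_ge0 (dot c.1 u - c.2); have := normr_ge0 t.
  move=> *.
  have e1 : `|t| * N1 d0 <= (N1 a * N1 (u - v') + `|dot c.1 u - c.2|) * N1 d0 by apply: ler_wpM2r.
  have e3 : N1 d0 * (N1 a * N1 (u - v')) <= N1 d0 * (N1 a * (k * eres E u)).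
    by apply: ler_wpM2l => //; apply: ler_wpM2l.
  have e4 : 0 <= N1 d0 * N1 a * k * `|dot c.1 u - c.2|.
    by rewrite !mulr_ge0.
  have e5 : 0 <= k * `|dot c.1 u - c.2| by rewrite mulr_ge0.
  have e6 : 0 <= N1 d0 * eres E u by rewrite mulr_ge0.
  nra.
move=> Hno; exists k; split => //.
move=> [|c E] //= [ca EE] [w /andP[Hcw Hw]] u.
have [v' [Hv' Hle]] := Hk E EE (ex_intro _ w Hw) u.
exists v'; split.
  apply/andP; split => //.
  have hd : dot a (v' - w) = 0.
    apply/eqP; apply/negPn/negP => hnz; apply: Hno.
    exists ((dot a (v' - w))^-1 *: (v' - w)); split; last by rewrite dotZ mulVf.
    apply/allP => b bE; rewrite dotZ dotB.
    have [c' c'E ->] : exists2 c', c' \in E & b = c'.1 by apply/mapP; rewrite EE.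
    by rewrite dotB (eqP (allP Hv' c' c'E)) (eqP (allP Hw c' c'E)) subrr mulr0.
  by rewrite -(eqP Hcw) ca; move: hd; rewrite dotB => /eqP; rewrite subr_eq0.
apply: le_trans Hle _; rewrite /eres big_cons ler_wpM2l // lerDr //.
Qed.

Lemma hoff {R : realType} {d : nat} (as_ es : seq 'cV[R]_d) : exists k, 0 <= k /\
  forall I E, map fst I = as_ -> map fst E = es -> (exists w, ineqsat I w && eqsat E w) ->
  forall u, exists v, (ineqsat I v && eqsat E v) /\ N1 (u - v) <= k * (ires I u + eres E u).
Proof.
elim: as_ es => [|a as_ IH] es.
  have [k [k0 Hk]] := hoff_eq es.
  exists k; split => // -[|//] E _ EE [w /andP[_ Hw]] u.
  have [v [Hv Hle]] := Hk E EE (ex_intro _ w Hw) u.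
  by exists v; rewrite /ires big_nil add0r.
have [k1 [k10 H1]] := IH es; have [k2 [k20 H2]] := IH (a :: es).
exists (k1 + k2 * (N1 a * k1 + 1)); split.
  by rewrite addr_ge0 // mulr_ge0 // addr_ge0 // mulr_ge0 ?N1_ge0.
move=> [|c I] //= E [ca II] EE [w /andP[/andP[Hcw HIw] HEw]] u.
have [v' [/andP[HIv' HEv'] Hle]] := H1 I E II EE (ex_intro _ w (introT andP (conj HIw HEw))) u.
have hres : ires (c :: I) u = Num.max 0 (dot c.1 u - c.2) + ires I u by rewrite /ires big_cons.
have hm0 : 0 <= Num.max 0 (dot c.1 u - c.2) by rewrite le_max lexx.
have := ires_ge0 I u; have := eres_ge0 E u => he0 hi0.
case: (leP (dot c.1 v') c.2) => hc.
  exists v'; split; first by rewrite /= hc HIv' HEv'.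
  apply: le_trans Hle _; rewrite hres.
  have : k1 <= k1 + k2 * (N1 a * k1 + 1).
    by rewrite lerDl mulr_ge0 // addr_ge0 // mulr_ge0 ?N1_ge0.
  nra.
pose t := dot c.1 v' - c.2.
pose g := dot c.1 v' - dot c.1 w.
have t0 : 0 < t by rewrite subr_gt0.
have tg : t <= g by rewrite /t /g lerD2l lerN2.
have g0 : 0 < g by apply: lt_le_trans tg.
pose l := t / g.
have l0 : 0 <= l by rewrite divr_ge0 // ltW.
have l1 : l <= 1 by rewrite ler_pdivrMr // mul1r.
pose q := v' + l *: (w - v').
have dq : forall b, dot b q = dot b v' + l * (dot b w - dot b v').
  by move=> b; rewrite dotD dotZ dotB.
have feas : exists w0, ineqsat I w0 && eqsat (c :: E) w0.
  exists q; apply/andP; split.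
    apply/allP => b bI; rewrite dq.
    have := allP HIv' b bI; have := allP HIw b bI => /= h1 h2.
    have : 0 <= l * (b.2 - dot b.1 w) by rewrite mulr_ge0 // subr_ge0.
    have : 0 <= (1 - l) * (b.2 - dot b.1 v') by rewrite mulr_ge0 // subr_ge0.
    nra.
  apply/andP; split.
    rewrite /= dq; apply/eqP.
    have -> : dot c.1 w - dot c.1 v' = - g by rewrite /g opprB.
    rewrite /l mulrN divfK ?gt_eqF // /t; ring.
  apply/allP => b bE; rewrite dq.
  by rewrite (eqP (allP HEv' b bE)) (eqP (allP HEw b bE)) subrr mulr0 addr0.
have EE2 : map fst (c :: E) = a :: es by rewrite /= EE ca.
have [v [/andP[HIv /andP[Hcv HEv]] Hle2]] := H2 I (c :: E) II EE2 feas v'.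
exists v; split.
  by apply/andP; split => //; apply/andP; split => //; rewrite (eqP Hcv).
have hr : ires I v' + eres (c :: E) v' <= t.
  rewrite /eres big_cons /ires big1_seq.
    rewrite big1_seq ?addr0 ?add0r ?gtr0_norm //.
    by move=> b bE; rewrite (eqP (allP HEv' b bE)) subrr normr0.
  move=> b bI; apply/eqP; rewrite eq_le le_max lexx /= ge_max lexx /= subr_le0.
  by rewrite andbT; exact: (allP HIv' b bI).
have h1 : N1 (u - v) <= N1 (u - v') + N1 (v' - v).
  have -> : u - v = (u - v') + (v' - v) by rewrite addrA subrK.
  exact: N1D.
have h2 : t <= N1 a * N1 (u - v') + Num.max 0 (dot c.1 u - c.2).
  have -> : t = dot a (v' - u) + (dot c.1 u - c.2) by rewrite dotB /t ca; ring.
  apply: lerD; last by rewrite le_max lexx orbT.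
  by rewrite N1B; apply: le_trans (ler_norm _) (dot_le _ _).
have h3 : N1 (v' - v) <= k2 * t.
  by apply: le_trans Hle2 _; apply: ler_wpM2l.
rewrite hres.
have := N1_ge0 a; have := N1_ge0 (u - v') => hx ha.
have e1 : k2 * t <= k2 * (N1 a * N1 (u - v') + Num.max 0 (dot c.1 u - c.2)) by apply: ler_wpM2l.
have e2 : k2 * (N1 a * N1 (u - v')) <= k2 * (N1 a * (k1 * (ires I u + eres E u))).
  by apply: ler_wpM2l => //; apply: ler_wpM2l.
have e4 : 0 <= k2 * N1 a * k1 * Num.max 0 (dot c.1 u - c.2) by rewrite !mulr_ge0.
have e5 : 0 <= k1 * Num.max 0 (dot c.1 u - c.2) by rewrite mulr_ge0.
have e6 : 0 <= k2 * (ires I u + eres E u) by rewrite mulr_ge0 // addr_ge0.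
nra.
Qed.

Definition cons_of {R : realType} {d m : nat} (A : 'M[R]_(m, d)) (b : 'cV[R]_m) :
  seq ('cV[R]_d * R) := [seq (\col_j A i j, b i 0) | i <- enum 'I_m].

Lemma cons_ofP {R : realType} {d m : nat} (A : 'M[R]_(m, d)) (b : 'cV[R]_m) v :
  ineqsat (cons_of A b) v <-> (forall i, (A *m v) i 0 <= b i 0).
Proof.
have hd : forall i, dot (\col_j A i j) v = (A *m v) i 0.
  by move=> i; rewrite /dot mxE; apply: eq_bigr => j _; rewrite mxE.
rewrite /ineqsat /cons_of all_map; split.
  move=> H i; have := allP H i; rewrite mem_enum /= hd; apply => //.
move=> H; apply/allP => i _ /=; rewrite hd; exact: H.
Qed.

Lemma sum_le_seq {R : realType} {T : eqType} (L : seq T) (f g : T -> R) :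
  (forall c, c \in L -> f c <= g c) -> \sum_(c <- L) f c <= \sum_(c <- L) g c.
Proof.
elim: L => [|c L IH] H; first by rewrite !big_nil.
rewrite !big_cons; apply: lerD; first by apply: H; rewrite mem_head.
by apply: IH => x xL; apply: H; rewrite in_cons xL orbT.
Qed.

Theorem lemma1 (R : realType) (d : nat) (C1 C2 : 'cV[R]_d -> Prop) :
  polyhedral C1 -> polyhedral C2 ->
  (exists z, C1 z /\ C2 z) ->
  exists M : R, 0 < M /\
    forall (x y p1 p2 p : 'cV[R]_d),
      C1 x -> C2 y ->
      is_proj C1 x p1 -> is_proj C2 y p2 ->
      is_proj (fun u => C1 u /\ C2 u) ((2 : R)^-1 *: (x + y)) p ->
      enorm (p1 + p2 - 2%:R *: p) <= M * enorm (p1 - p2).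
Proof.
move=> [m1 [A1 [b1 HC1]]] [m2 [A2 [b2 HC2]]] [z [z1 z2]].
pose I1 := cons_of A1 b1; pose I2 := cons_of A2 b2.
have HI1 : forall v, C1 v <-> ineqsat I1 v by move=> v; rewrite cons_ofP HC1.
have HI2 : forall v, C2 v <-> ineqsat I2 v by move=> v; rewrite cons_ofP HC2.
have HI : forall v, C1 v /\ C2 v <-> ineqsat (I1 ++ I2) v && eqsat [::] v.
  move=> v; have -> : ineqsat (I1 ++ I2) v = ineqsat I1 v && ineqsat I2 v by rewrite /ineqsat all_cat.
  rewrite andbT HI1 HI2; split; first by case=> h1 h2; rewrite h1 h2.
  by case/andP.
have [k [k0 Hk]] := hoff (map fst (I1 ++ I2)) [::].
pose S := \sum_(c <- I1 ++ I2) N1 c.1.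
have S0 : 0 <= S by apply: sumr_ge0 => c _; exact: N1_ge0.
pose D : R := d%:R.
have D0 : 0 <= D by exact: ler0n.
exists (2 * D * k * S * D + 1); split.
  by rewrite ltr_pwDr // !mulr_ge0.
move=> x y p1 p2 p Hx Hy [_ P1] [_ P2] [[Cp1 Cp2] P].
have ez : forall v : 'cV[R]_d, enorm (v - v) <= 0.
  by move=> v; rewrite subrr /enorm big1 ?sqrtr0 // => i _; rewrite mxE expr0n.
have -> : p1 = x by apply/eqP; rewrite eq_sym -subr_eq0; apply/eqP/enorm_eq0; apply: le_trans (P1 x Hx) (ez x).
have -> : p2 = y by apply/eqP; rewrite eq_sym -subr_eq0; apply/eqP/enorm_eq0; apply: le_trans (P2 y Hy) (ez y).
pose mid := (2 : R)^-1 *: (x + y).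
have [q [Hq Hqle]] := Hk (I1 ++ I2) [::] erefl erefl (ex_intro _ z (proj1 (HI z) (conj z1 z2))) mid.
have [q1 q2] := proj2 (HI q) Hq.
have hres : ires (I1 ++ I2) mid + eres [::] mid <= S * N1 (x - y).
  rewrite /eres big_nil addr0 /S mulr_suml; apply: sum_le_seq => c.
  have gen : forall v, ineqsat [:: c] v -> N1 (mid - v) <= N1 (x - y) ->
      Num.max 0 (dot c.1 mid - c.2) <= N1 c.1 * N1 (x - y).
    move=> v /andP[hv _] hN; rewrite ge_max mulr_ge0 ?N1_ge0 //=.
    apply: le_trans (_ : dot c.1 mid - dot c.1 v <= _).
      by rewrite lerD2l lerN2.
    rewrite -dotB; apply: le_trans (ler_norm _) _; apply: le_trans (dot_le _ _) _.
    by apply: ler_wpM2l => //; exact: N1_ge0.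
  have hm1 : mid - x = (2 : R)^-1 *: (y - x).
    by apply/matrixP => i j; rewrite !mxE; field.
  have hm2 : mid - y = (2 : R)^-1 *: (x - y).
    by apply/matrixP => i j; rewrite !mxE; field.
  have half : forall w : 'cV[R]_d, N1 ((2 : R)^-1 *: w) <= N1 w.
    move=> w; rewrite N1Z ger0_norm ?invr_ge0 ?ler0n //.
    have := N1_ge0 w; have : (2 : R)^-1 <= 1 by rewrite invf_le1 ?ler1n //.
    nra.
  rewrite mem_cat => /orP[] hc.
    apply: (gen x); first by rewrite /= andbT; exact: (allP (proj1 (HI1 x) Hx)).
    by rewrite hm1 N1B half.
  apply: (gen y); first by rewrite /= andbT; exact: (allP (proj1 (HI2 y) Hy)).
  by rewrite hm2 half.
have -> : x + y - 2%:R *: p = 2%:R *: (mid - p).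
  by apply/matrixP => i j; rewrite !mxE; field.
have c1 : enorm (2%:R *: (mid - p)) <= 2 * (D * enorm (mid - p)).
  apply: le_trans (enorm_le_N1 _) _; rewrite N1Z ger0_norm ?ler0n //.
  by apply: ler_wpM2l => //; exact: N1_le_enorm.
have c2 : enorm (mid - p) <= N1 (mid - q) by apply: le_trans (P q (conj q1 q2)) (enorm_le_N1 _).
have c3 : N1 (x - y) <= D * enorm (x - y) by exact: N1_le_enorm.
have := enorm_le_N1 (x - y) => c4.
have e0 : 0 <= enorm (x - y) by apply: sqrtr_ge0.
have e1 : 0 <= enorm (mid - p) by apply: sqrtr_ge0.
have f1 : D * enorm (mid - p) <= D * (k * (S * N1 (x - y))).
  apply: ler_wpM2l => //; apply: le_trans c2 _; apply: le_trans Hqle _; exact: ler_wpM2l.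
have f2 : D * (k * (S * N1 (x - y))) <= D * (k * (S * (D * enorm (x - y)))).
  by apply: ler_wpM2l => //; apply: ler_wpM2l => //; apply: ler_wpM2l.
apply: le_trans c1 _.
have ff := le_trans f1 f2.
nra.
Qed.
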